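(* Let $f,g:\mathbb{R}^n\to\mathbb{R}$ satisfy assumptions (A1)–(A4) below, let $\zeta\in[0,1)$ and $x_0\in\Omega=\{x:g(x)\le0\}$. Let $x_\zeta^\sharp=x(t^\sharp;\zeta,x_0)$ be the solution point, where $t^\sharp$ is the first time with $g(x(t^\sharp;\zeta,x_0))=0$ (so $g(x(t;\zeta,x_0))<0$ for $t<t^\sharp$). Then $$\epsilon(x_\zeta^\sharp)=\left|\frac{\nabla f(x_\zeta^\sharp)}{|\nabla f(x_\zeta^\sharp)|}+\frac{\nabla g(x_\zeta^\sharp)}{|\nabla g(x_\zeta^\sharp)|}\right|\le\sqrt{2(1-\zeta)}.$$
   Context: Assumptions: (A1) $\lim_{|x|\to\infty} f(x)=+\infty$; (A2) $\nabla f(x)\neq 0$ for all $x\in\Omega$; (A3) $\nabla g(x)\neq 0$ for all $x\in\Omega$; (A4) $f,g$ twice continuously differentiable. For $\zeta\in[0,1)$, $\mathbf{s}_\zeta(x)=-\frac{\nabla f(x)}{|\nabla f(x)|}-\zeta\frac{\nabla g(x)}{|\nabla g(x)|}$ ($|\cdot|$ Euclidean norm), and $x(t;\zeta,x_0)$ is the solution of $\frac{dx}{dt}=\mathbf{s}_\zeta(x)$, $x(0)=x_0$, on its maximal interval of existence in $E=\{x:\nabla f(x)\ne0,\nabla g(x)\ne0\}$. *)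

(* Defs.v *)
From HB Require Import structures.
From mathcomp Require Import all_boot all_order all_algebra.
From mathcomp Require Import all_classical all_reals all_analysis.
Set Implicit Arguments. Unset Strict Implicit. Unset Printing Implicit Defensive.
Import Order.TTheory GRing.Theory Num.Theory.
Import numFieldNormedType.Exports.
Local Open Scope ring_scope.

Section Defs.
Variables (R : realType) (n : nat).

Definition dotv (u v : 'rV[R]_n) : R := \sum_(i < n) u 0 i * v 0 i.
Definition enorm (v : 'rV[R]_n) : R := Num.sqrt (dotv v v).

Definition ebasis (i : 'I_n) : 'rV[R]_n := delta_mx 0 i.

Definition grad (f : 'rV[R]_n -> R) (x : 'rV[R]_n) : 'rV[R]_n :=
  \row_(i < n) ('D_(ebasis i) f x).

Definition coercive (f : 'rV[R]_n -> R) : Prop :=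
  forall M : R, exists r : R, forall x, r < enorm x -> M < f x.

Definition C2 (f : 'rV[R]_n -> R) : Prop :=
  (forall x, differentiable f x) /\
  (forall x, differentiable (grad f) x) /\
  (forall i j : 'I_n,
     continuous (fun x => 'D_(ebasis j) (fun y => grad f y 0 i) x)).

Definition s_field (f g : 'rV[R]_n -> R) (zeta : R) (x : 'rV[R]_n) : 'rV[R]_n :=
  - ((enorm (grad f x))^-1 *: grad f x) - zeta *: ((enorm (grad g x))^-1 *: grad g x).

Definition eps_opt (f g : 'rV[R]_n -> R) (x : 'rV[R]_n) : R :=
  enorm ((enorm (grad f x))^-1 *: grad f x + (enorm (grad g x))^-1 *: grad g x).

End Defs.

(* Main.v *)
Require Import Defs.
From HB Require Import structures.
From mathcomp Require Import all_boot all_order all_algebra.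
From mathcomp Require Import all_classical all_reals all_analysis.
From mathcomp Require Import lra.
Import Order.TTheory GRing.Theory Num.Theory.
Import numFieldNormedType.Exports.
Local Open Scope ring_scope.

Section Dot.
Variables (R : realType) (n : nat).
Implicit Types u v w : 'rV[R]_n.

Lemma dotvC u v : dotv u v = dotv v u.
Proof. by apply: eq_bigr => i _; rewrite mulrC. Qed.

Lemma dotvDr u v w : dotv u (v + w) = dotv u v + dotv u w.
Proof. by rewrite /dotv -big_split; apply: eq_bigr => i _; rewrite mxE mulrDr. Qed.

Lemma dotvZr a u v : dotv u (a *: v) = a * dotv u v.
Proof. by rewrite /dotv mulr_sumr; apply: eq_bigr => i _; rewrite mxE mulrCA. Qed.

Lemma dotvNr u v : dotv u (- v) = - dotv u v.
Proof. by rewrite /dotv -sumrN; apply: eq_bigr => i _; rewrite mxE mulrN. Qed.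

Lemma dotvDl u v w : dotv (v + w) u = dotv v u + dotv w u.
Proof. by rewrite dotvC dotvDr dotvC (dotvC u). Qed.

Lemma dotvZl a u v : dotv (a *: v) u = a * dotv v u.
Proof. by rewrite dotvC dotvZr dotvC. Qed.

Lemma dotv_ge0 u : 0 <= dotv u u.
Proof. by apply: sumr_ge0 => i _; rewrite -expr2 sqr_ge0. Qed.

Lemma enorm_sq u : enorm u ^+ 2 = dotv u u.
Proof. by rewrite /enorm sqr_sqrtr // dotv_ge0. Qed.

Lemma enorm_gt0 u : u != 0 -> 0 < enorm u.
Proof.
move=> u0; rewrite lt_def sqrtr_ge0 andbT sqrtr_eq0 -ltNge lt_def dotv_ge0 andbT.
apply: contra u0 => /eqP h; apply/eqP/rowP => i; rewrite !mxE.
have hge : forall j : 'I_n, true -> 0 <= u 0 j * u 0 j.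
  by move=> j _; rewrite -expr2 sqr_ge0.
move: (psumr_eq0P hge h (i:=i) isT) => /eqP.
by rewrite mulf_eq0 orbb => /eqP.
Qed.

Lemma diff_dot (g : 'rV[R]_n -> R) y v : differentiable g y ->
  'd g y v = dotv (grad g y) v.
Proof.
move=> dg; rewrite {1}(row_sum_delta v) linear_sum /dotv; apply: eq_bigr => i _.
by rewrite linearZ /= -deriveE // mxE mulrC.
Qed.
End Dot.


Local Open Scope classical_set_scope.
Lemma left_sub (R : realType) (p : R) : p^'- `=>` p^'.
Proof.
move=> A; rewrite /dnbhs /at_left /within /=.
apply: filterS => y Ay yp; apply: Ay.
by rewrite lt_eqF.
Qed.

Lemma deriv_ge0 (R : realType) (h : R -> R) t (tp: 0 < t) :
  derivable h t 1 -> (forall e, 0 <= e < t -> h e < 0) -> h t = 0 -> 0 <= 'D_1 h t.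
Proof.
move=> dh hneg ht0.
have cl : (fun e : R => e^-1 *: ((h \o shift t) (e *: 1) - h t)) @ 0^'- --> 'D_1 h t.
  exact: cvg_trans (cvg_app _ (@left_sub R 0)) dh.
rewrite -(cvg_lim _ cl) //.
apply: limr_ge; first by apply/cvg_ex; eexists; exact cl.
near=> e.
have e0 : e < 0 by near: e; exact: nbhs_left_lt.
have et : - t < e by near: e; apply: nbhs_left_gt; rewrite oppr_lt0.
rewrite /= ht0 subr0.
have -> : e%:A = e :> R by rewrite /GRing.scale /= mulr1.
rewrite addrC.
have : h (t + e) < 0 by apply: hneg; apply/andP; split; lra.
move=> hl.
change (0 <= e^-1 * h (t + e)).
by rewrite ltW // nmulr_rgt0 // invr_lt0.
Unshelve. all: by end_near.
Qed.

Local Close Scope classical_set_scope.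

Theorem theorem5p12 (R : realType) (n : nat) (f g : 'rV[R]_n -> R)
  (A1 : coercive f)
  (A2 : forall x, g x <= 0 -> grad f x != 0)
  (A3 : forall x, g x <= 0 -> grad g x != 0)
  (A4f : C2 f) (A4g : C2 g)
  (zeta : R) (hzeta0 : 0 <= zeta) (hzeta1 : zeta < 1)
  (x0 : 'rV[R]_n) (hx0 : g x0 <= 0)
  (x : R -> 'rV[R]_n) (tsharp : R)
  (hx_init : x 0 = x0)
  (hx_ode : forall t, 0 <= t <= tsharp -> is_derive t (1 : R) x (s_field f g zeta (x t)))
  (htpos : 0 < tsharp)
  (hg_before : forall t, 0 <= t < tsharp -> g (x t) < 0)
  (hg_sharp : g (x tsharp) = 0) :
  eps_opt f g (x tsharp) <= Num.sqrt (2 * (1 - zeta)).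
Proof.
have gy : g (x tsharp) <= 0 by rewrite hg_sharp.
have [dx Dx] := hx_ode tsharp (ltac:(by rewrite ltW //=)).
have dxd : differentiable x tsharp by apply/derivable1_diffP.
have dg : differentiable g (x tsharp) := A4g.1 _.
have dcomp : differentiable (g \o x) tsharp := differentiable_comp dxd dg.
have key := @deriv_ge0 R (g \o x) tsharp htpos (@diff_derivable R R^o R^o (g \o x) tsharp 1 dcomp) hg_before hg_sharp.
rewrite deriveE // diff_comp //= -(@deriveE _ _ _ x tsharp 1 dxd) Dx diff_dot // in key.
move: key; rewrite /eps_opt /s_field.
set y := x tsharp.
set F := grad f y; set G := grad g y.
have a0 := @enorm_gt0 R n _ (A2 _ gy); have b0 := @enorm_gt0 R n _ (A3 _ gy).
rewrite -/F in a0; rewrite -/G in b0.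
set a := enorm F; set b := enorm G.
rewrite /enorm => key; apply: ler_wsqrtr.
have ha : dotv F F = a ^+ 2 by rewrite /a enorm_sq.
have hb : dotv G G = b ^+ 2 by rewrite /b enorm_sq.
rewrite !dotvDr !dotvNr !dotvZr hb in key.
rewrite !dotvDl !dotvDr !dotvZl !dotvZr ha hb (@dotvC R n G F).
rewrite (@dotvC R n G F) in key.
have an : a != 0 by rewrite lt0r_neq0.
have bn : b != 0 by rewrite lt0r_neq0.
have e1 : a^-1 * (a^-1 * a ^+ 2) = 1 by rewrite expr2 (mulrA a^-1 a a) mulVf // mul1r mulVf.
have e2 : b^-1 * (b^-1 * b ^+ 2) = 1 by rewrite expr2 (mulrA b^-1 b b) mulVf // mul1r mulVf.
have e3 : b^-1 * b ^+ 2 = b by rewrite expr2 mulrA mulVf // mul1r.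
rewrite e3 in key; rewrite e1 e2.
set c := dotv F G in key *.
set k := a^-1 * c in key *.
rewrite (mulrCA a^-1) -/k.
have hk : k <= - (zeta * b) by lra.
have : b^-1 * k <= b^-1 * (- (zeta * b)) by rewrite ler_wpM2l // invr_ge0 ltW.
have -> : b^-1 * (- (zeta * b)) = - zeta by rewrite mulrN (mulrC zeta) mulrA mulVf // mul1r.
move=> h.
lra.
Qed.
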